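(* Let $\mathrm{k}$ be an infinite field. For every integer $n\geq4$, the $\mathrm{k}$-algebra $\mathrm{k}[T]/(T^n)$ has infinitely many subalgebras.
   Context: Subalgebras are unital (contain $1$). *)

(* Defs.v *)
From HB Require Import structures.
From mathcomp Require Import all_boot all_order all_algebra.
From mathcomp Require Import boolp classical_sets cardinality.
Set Implicit Arguments. Unset Strict Implicit. Unset Printing Implicit Defensive.
Import GRing.Theory.
Local Open Scope ring_scope.
Local Open Scope classical_set_scope.

(* The k-algebra k[T]/(T^n) is modeled by its canonical representatives:
   polynomials of size <= n (degree < n), with the usual addition and
   k-scaling, unit 1, and multiplication reduced modulo T^n. *)
Definition trunc_mul (K : fieldType) (n : nat) (p q : {poly K}) : {poly K} :=
  (p * q) %% 'X^n.

Definition truncpoly (K : fieldType) (n : nat) : set {poly K} :=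
  [set p | (size p <= n)%N].

Definition is_subalgebra (K : fieldType) (n : nat) (S : set {poly K}) : Prop :=
  [/\ S `<=` @truncpoly K n,
      S 1,
      (forall p q, S p -> S q -> S (p + q)),
      (forall (a : K) p, S p -> S (a *: p)) &
      (forall p q, S p -> S q -> S (trunc_mul n p q))].

(* Main.v *)
Require Import Defs.
From mathcomp Require Import all_boot all_order all_algebra.
From mathcomp Require Import boolp classical_sets cardinality.
From mathcomp Require Import ring.
Set Implicit Arguments. Unset Strict Implicit. Unset Printing Implicit Defensive.
Import GRing.Theory.
Local Open Scope ring_scope.
Local Open Scope classical_set_scope.

Definition Sa (K : fieldType) (n : nat) (a : K) : set {poly K} :=
  [set p | [/\ (size p <= n)%N, p`_1 = 0 & p`_3 = a * p`_2]].

Lemma Sa_sub (K : fieldType) (n : nat) (a : K) : (4 <= n)%N ->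
  is_subalgebra n (Sa n a).
Proof.
move=> n4; split.
- by move=> p [].
- by split; rewrite ?size_poly1 ?(leq_trans _ n4) // !coef1 /= ?mulr0.
- move=> p q [hp p1 p3] [hq q1 q3]; split.
  + by rewrite (leq_trans (size_polyD _ _)) // geq_max hp hq.
  + by rewrite coefD p1 q1 addr0.
  + by rewrite !coefD p3 q3 mulrDr.
- move=> c p [hp p1 p3]; split.
  + by rewrite (leq_trans (size_scale_leq _ _)).
  + by rewrite coefZ p1 mulr0.
  + by rewrite !coefZ p3 mulrCA.
- move=> p q [hp p1 p3] [hq q1 q3]; rewrite /trunc_mul -Pdiv.IdomainMonic.take_poly_modp; split.
  + exact: size_take_poly.
  + rewrite coef_take_poly (leq_trans _ n4) // coefM.
    by rewrite !big_ord_recr big_ord0 /= p1 q1 !(mulr0, mul0r, add0r, addr0).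
  + rewrite !coef_take_poly (leq_trans _ n4) // (leq_trans _ n4) // !coefM.
    rewrite !big_ord_recr big_ord0 /= p1 q1 p3 q3.
    rewrite !subnn big_ord0 !(mulr0, mul0r, add0r, addr0) subn0; ring.
Qed.

Theorem lemma3p4 (K : fieldType) (n : nat) :
  infinite_set [set: K] -> (4 <= n)%N ->
  infinite_set [set S : set {poly K} | is_subalgebra n S].
Proof.
move=> Kinf n4 Bfin; apply: Kinf.
have -> : [set: K] = (@Sa K n) @^-1` [set S : set {poly K} | is_subalgebra n S].
  by apply/seteqP; split=> a //= _; exact: Sa_sub.
apply: finite_preimage Bfin => a b _ _ eab.
have : Sa n a ('X^2 + a *: 'X^3).
  split.
  + rewrite (leq_trans (size_polyD _ _)) // geq_max size_polyXn (leq_trans _ n4) //=.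
    by rewrite (leq_trans (size_scale_leq _ _)) // size_polyXn.
  + by rewrite coefD coefZ !coefXn /= mulr0 addr0.
  + by rewrite !coefD !coefZ !coefXn /= mulr1 mulr0 add0r addr0 mulr1.
rewrite eab => -[_ _].
by rewrite !coefD !coefZ !coefXn /= mulr1 mulr0 add0r addr0 mulr1.
Qed.
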